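(* Let $S$ be a finite set of red and blue points in the plane in general position, containing at least one point of each color, and let $T$ be a minimum bichromatic spanning tree of $S$. Let $e_1$ and $e_2$ be two edges of $T$ that cross each other, and let $\pi(e_1,e_2)$ denote the unique shortest path in $T$ that contains exactly one endpoint of $e_1$ and exactly one endpoint of $e_2$ (i.e., the path in $T$ joining the endpoint of $e_1$ closest to $e_2$ with the endpoint of $e_2$ closest to $e_1$). Then the two endpoints of $\pi(e_1,e_2)$ have different colors.
   Context: A set of points is in general position if no three of them are collinear. A bichromatic spanning tree of a set $S$ of red and blue points is a spanning tree on vertex set $S$, drawn with straight-line segment edges, in which every edge has one red and one blue endpoint. A minimum bichromatic spanning tree (MinBST) is a bichromatic spanning tree of minimum total Euclidean edge length. Two edges (segments) cross if they share a point that is interior to both segments. *)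

(* Defs.v *)
From HB Require Import structures.
From mathcomp Require Import all_boot all_order all_algebra.
From mathcomp Require Import reals.
Set Implicit Arguments. Unset Strict Implicit. Unset Printing Implicit Defensive.
Import Order.TTheory GRing.Theory Num.Theory.
Local Open Scope ring_scope.

Section Geom.
Variable R : realType.
Definition point := (R * R)%type.

Definition dist (a b : point) : R :=
  Num.sqrt ((a.1 - b.1) ^+ 2 + (a.2 - b.2) ^+ 2).

Definition collinear (a b c : point) : Prop :=
  (b.1 - a.1) * (c.2 - a.2) - (b.2 - a.2) * (c.1 - a.1) = 0.

Definition seg_cross (a b c d : point) : Prop :=
  exists t s : R, [/\ 0 < t < 1, 0 < s < 1,
    a.1 + t * (b.1 - a.1) = c.1 + s * (d.1 - c.1) &
    a.2 + t * (b.2 - a.2) = c.2 + s * (d.2 - c.2)].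
End Geom.

Section Graphs.
Variable V : finType.

(* A bichromatic graph on V (colour: true = red, false = blue) is given by
   its edge set E : {set V * V}, each undirected edge {r,b} being stored
   exactly once as the ordered pair (r, b) with r red and b blue. *)
Definition bichromatic (col : V -> bool) (E : {set V * V}) : Prop :=
  forall e, e \in E -> col e.1 /\ ~~ col e.2.

Definition adj (E : {set V * V}) : rel V :=
  fun u v => ((u, v) \in E) || ((v, u) \in E).

Definition is_path (E : {set V * V}) (x : V) (s : seq V) : Prop :=
  uniq (x :: s) /\ path (adj E) x s.

Definition is_cycle (E : {set V * V}) (s : seq V) : Prop :=
  [/\ 3 <= size s, uniq s & cycle (adj E) s]%N.

Definition spanning_tree (E : {set V * V}) : Prop :=
  (forall u v, connect (adj E) u v) /\ (forall s, ~ is_cycle E s).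

Definition bst (col : V -> bool) (E : {set V * V}) : Prop :=
  bichromatic col E /\ spanning_tree E.

Definition tree_length (R : realType) (p : V -> point R) (E : {set V * V}) : R :=
  \sum_(e in E) dist (p e.1) (p e.2).

Definition min_bst (R : realType) (p : V -> point R) (col : V -> bool)
  (E : {set V * V}) : Prop :=
  bst col E /\
  forall E', bst col E' -> tree_length p E <= tree_length p E'.

Definition general_position (R : realType) (p : V -> point R) : Prop :=
  forall i j k : V, i != j -> j != k -> i != k -> ~ collinear (p i) (p j) (p k).

Definition one_endpoint (P : seq V) (e : V * V) : bool :=
  (e.1 \in P) != (e.2 \in P).
End Graphs.

(* Main.v *)
Require Import Defs.
From HB Require Import structures.
From mathcomp Require Import all_boot all_order all_algebra.
From mathcomp Require Import reals.
From mathcomp Require Import ring lra.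
From Stdlib Require Import Classical.
Import Order.TTheory GRing.Theory Num.Theory.

Section Geo.
Local Open Scope ring_scope.
Variable R : realType.
Definition nrm (a b : R) := Num.sqrt (a^+2 + b^+2).
Lemma nrm_ge0 a b : 0 <= nrm a b. Proof. exact: sqrtr_ge0. Qed.
Lemma sqr_nrm a b : nrm a b ^+ 2 = a^+2 + b^+2.
Proof. by rewrite sqr_sqrtr // addr_ge0 // sqr_ge0. Qed.
Lemma nrm_scale k a b : 0 <= k -> nrm (k*a) (k*b) = k * nrm a b.
Proof.
move=> k0; rewrite /nrm !exprMn -mulrDr sqrtrM ?sqrtr_sqr ?ger0_norm //; exact: sqr_ge0.
Qed.
Lemma dot_le a b c d : a*c + b*d <= nrm a b * nrm c d.
Proof.
rewrite /nrm -sqrtrM ?addr_ge0 ?sqr_ge0 //.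
have -> : (a^+2 + b^+2) * (c^+2 + d^+2) = (a*c+b*d)^+2 + (a*d - b*c)^+2 by ring.
apply: le_trans (ler_norm _) _.
rewrite -sqrtr_sqr ler_sqrt ?addr_ge0 ?sqr_ge0 // lerDl sqr_ge0 //.
Qed.
Lemma dot_lt a b c d : a*d - b*c != 0 -> a*c + b*d < nrm a b * nrm c d.
Proof.
move=> h.
rewrite /nrm -sqrtrM ?addr_ge0 ?sqr_ge0 //.
have -> : (a^+2 + b^+2) * (c^+2 + d^+2) = (a*c+b*d)^+2 + (a*d - b*c)^+2 by ring.
apply: le_lt_trans (ler_norm _) _.
rewrite -sqrtr_sqr ltr_sqrt; last by apply: ltr_pwDr; rewrite ?sqr_ge0 // lt_def sqrf_eq0 h sqr_ge0.
by rewrite ltr_pwDr ?sqr_ge0 // lt_def sqrf_eq0 h sqr_ge0.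
Qed.
Lemma sqrt_le_of (z w : R) : 0 <= w -> z <= w^+2 -> Num.sqrt z <= w.
Proof. move=> w0 h; rewrite -(ger0_norm w0) -sqrtr_sqr; exact: ler_wsqrtr. Qed.
Lemma sqrt_lt_of (z w : R) : 0 <= z -> 0 <= w -> z < w^+2 -> Num.sqrt z < w.
Proof.
move=> z0 w0 h; rewrite -(ger0_norm w0) -sqrtr_sqr ltr_sqrt //.
exact: le_lt_trans h.
Qed.
Lemma tri a b c d : nrm (a+c) (b+d) <= nrm a b + nrm c d.
Proof.
apply: sqrt_le_of; first by rewrite addr_ge0 ?nrm_ge0.
rewrite (sqrrD (nrm a b)) !sqr_nrm. have := dot_le a b c d => h. nra.
Qed.
Lemma tri_lt a b c d : a*d - b*c != 0 -> nrm (a+c) (b+d) < nrm a b + nrm c d.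
Proof.
move=> hc; apply: sqrt_lt_of; first (by rewrite addr_ge0 ?sqr_ge0); first by rewrite addr_ge0 ?nrm_ge0.
rewrite (sqrrD (nrm a b)) !sqr_nrm. have := dot_lt a b c d hc => h. nra.
Qed.

Lemma eq_via (A B X Y : R) : X = Y -> A - B = X - Y -> A = B.
Proof. by move=> -> h; apply/eqP; rewrite -subr_eq0 h subrr. Qed.

Lemma distE (P Q : point R) : dist P Q = nrm (P.1 - Q.1) (P.2 - Q.2).
Proof. by []. Qed.

Lemma cross_ineq (P Q U W : point R) : seg_cross P Q U W -> ~ collinear P Q W ->
  dist P W + dist U Q < dist P Q + dist U W.
Proof.
case=> t [s] [/andP[t0 t1] /andP[s0 s1] e1 e2] ncol.
have h1 : dist P W < nrm (t * (P.1 - Q.1)) (t * (P.2 - Q.2))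
                   + nrm ((1 - s) * (U.1 - W.1)) ((1 - s) * (U.2 - W.2)).
  rewrite distE.
  have -> : P.1 - W.1 = t * (P.1 - Q.1) + (1 - s) * (U.1 - W.1).
    by apply: (@eq_via _ _ _ _ e1); ring.
  have -> : P.2 - W.2 = t * (P.2 - Q.2) + (1 - s) * (U.2 - W.2).
    by apply: (@eq_via _ _ _ _ e2); ring.
  apply: tri_lt.
  have -> : t * (P.1 - Q.1) * ((1 - s) * (U.2 - W.2)) - t * (P.2 - Q.2) * ((1 - s) * (U.1 - W.1))
     = t * ((P.1 - Q.1) * ((1 - s) * (U.2 - W.2)) - (P.2 - Q.2) * ((1 - s) * (U.1 - W.1))) by ring.
  have f1 : (1 - s) * (U.1 - W.1) = P.1 + t * (Q.1 - P.1) - W.1.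
    by rewrite e1; ring.
  have f2 : (1 - s) * (U.2 - W.2) = P.2 + t * (Q.2 - P.2) - W.2.
    by rewrite e2; ring.
  rewrite f1 f2.
  have -> : (P.1 - Q.1) * (P.2 + t * (Q.2 - P.2) - W.2) - (P.2 - Q.2) * (P.1 + t * (Q.1 - P.1) - W.1)
     = (Q.1 - P.1) * (W.2 - P.2) - (Q.2 - P.2) * (W.1 - P.1) by ring.
  rewrite mulf_eq0 negb_or gt_eqF //=; apply/eqP => h; exact: ncol h.
have h2 : dist U Q <= nrm (s * (U.1 - W.1)) (s * (U.2 - W.2))
                   + nrm ((1 - t) * (P.1 - Q.1)) ((1 - t) * (P.2 - Q.2)).
  rewrite distE.
  have -> : U.1 - Q.1 = s * (U.1 - W.1) + (1 - t) * (P.1 - Q.1).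
    by apply: (@eq_via _ _ _ _ (esym e1)); ring.
  have -> : U.2 - Q.2 = s * (U.2 - W.2) + (1 - t) * (P.2 - Q.2).
    by apply: (@eq_via _ _ _ _ (esym e2)); ring.
  exact: tri.
move: h1 h2; rewrite !nrm_scale -?distE; try lra.
all: rewrite ?subr_ge0; exact: ltW.
Qed.

Lemma dist_sym (P Q : point R) : dist P Q = dist Q P.
Proof. by rewrite /dist -!(sqrrN (P.1 - _)) -(sqrrN (P.2 - _)) !opprB. Qed.

Lemma cross_sym (P Q U W : point R) : seg_cross P Q U W -> seg_cross U W P Q.
Proof. by case=> t [s] [h1 h2 e1 e2]; exists s, t; split. Qed.

Lemma cross_rev (P Q U W : point R) : seg_cross P Q U W -> seg_cross Q P W U.
Proof.
case=> t [s] [/andP[t0 t1] /andP[s0 s1] e1 e2]; exists (1 - t), (1 - s); split.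
- by apply/andP; split; lra.
- by apply/andP; split; lra.
- by apply: (@eq_via _ _ _ _ e1); ring.
- by apply: (@eq_via _ _ _ _ e2); ring.
Qed.

Lemma cross_shared1 (P Q W : point R) : seg_cross P Q P W -> collinear P Q W.
Proof.
case=> t [s] [/andP[t0 t1] /andP[s0 s1] e1 e2].
have a1 : t * (Q.1 - P.1) = s * (W.1 - P.1) by apply: (@eq_via _ _ _ _ e1); ring.
have a2 : t * (Q.2 - P.2) = s * (W.2 - P.2) by apply: (@eq_via _ _ _ _ e2); ring.
have : t * ((Q.1 - P.1) * (W.2 - P.2) - (Q.2 - P.2) * (W.1 - P.1)) = 0.
  have -> : t * ((Q.1 - P.1) * (W.2 - P.2) - (Q.2 - P.2) * (W.1 - P.1)) =
     (t * (Q.1 - P.1)) * (W.2 - P.2) - (t * (Q.2 - P.2)) * (W.1 - P.1) by ring.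
  rewrite a1 a2; ring.
by move/eqP; rewrite mulf_eq0 gt_eqF //= => /eqP.
Qed.

Lemma cross_shared2 (P Q U : point R) : seg_cross P Q U Q -> collinear P Q U.
Proof.
case=> t [s] [/andP[t0 t1] /andP[s0 s1] e1 e2].
have a1 : (1 - t) * (P.1 - Q.1) = (1 - s) * (U.1 - Q.1) by apply: (@eq_via _ _ _ _ e1); ring.
have a2 : (1 - t) * (P.2 - Q.2) = (1 - s) * (U.2 - Q.2) by apply: (@eq_via _ _ _ _ e2); ring.
have : (1 - t) * ((Q.1 - P.1) * (U.2 - P.2) - (Q.2 - P.2) * (U.1 - P.1)) = 0.
  have -> : (1 - t) * ((Q.1 - P.1) * (U.2 - P.2) - (Q.2 - P.2) * (U.1 - P.1)) =
     - (((1 - t) * (P.1 - Q.1)) * (U.2 - Q.2) - ((1 - t) * (P.2 - Q.2)) * (U.1 - Q.1)) by ring.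
  rewrite a1 a2; ring.
have : 1 - t != 0 by rewrite subr_eq0 eq_sym lt_eqF.
by move=> h /eqP; rewrite mulf_eq0 (negPf h) /= => /eqP.
Qed.
End Geo.
Arguments cross_ineq {R P Q U W}.
Arguments cross_shared1 {R P Q W}.
Arguments cross_shared2 {R P Q U}.
Arguments cross_rev {R P Q U W}.
Arguments cross_sym {R P Q U W}.

Section Graph.
Variable V : finType.
Implicit Types (F : {set V * V}) (u v : V).

Lemma adj_sym F : symmetric (adj F).
Proof. by move=> u v; rewrite /adj orbC. Qed.

Lemma connect_symF F u v : connect (adj F) u v = connect (adj F) v u.
Proof. exact: (sym_connect_sym (adj_sym F)). Qed.

Lemma adj_del F e u v : (u, v) != e -> (v, u) != e -> adj F u v -> adj (F :\ e) u v.
Proof. by rewrite /adj !inE => -> ->. Qed.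

Lemma adj_sub F F' u v : F \subset F' -> adj F u v -> adj F' u v.
Proof. by move=> /subsetP s /orP[] h; rewrite /adj (s _ h) ?orbT. Qed.

Lemma connect_subF F F' u v : F \subset F' -> connect (adj F) u v -> connect (adj F') u v.
Proof. move=> s; apply: connect_sub => a b h; apply: connect1; exact: adj_sub h. Qed.

Lemma cycle_edge F s : is_cycle F s ->
  exists2 e, e \in F & forall u v, adj F u v -> connect (adj (F :\ e)) u v.
Proof.
case: s => [|x0 [|x1 t]] [hs hu hc] //.
have tn : t != [::] by case: t hs {hu hc}.
move: hc; rewrite /cycle /= rcons_path => /and3P [h01 hp hk0].
set xk := last x1 t in hk0 *.
have xkt : xk \in t by rewrite /xk; case: t tn {hs hu hp hk0 xk} => // y t' _ /=; exact: mem_last.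
have Exk : xk = last x1 t by []. clearbody xk.
move: hu; rewrite /= !inE negb_or => /andP[/andP[n01 n0t] /andP[n1t ut]].
have n1k : x1 != xk by apply: contraNneq n1t => ->.
have n0k : x0 != xk by apply: contraNneq n0t => ->.
pose e := if (xk, x0) \in F then (xk, x0) else (x0, xk).
have eF : e \in F by rewrite /e; case: ifP => // h; move: hk0; rewrite /adj h.
have ex0 : (e.1 == x0) || (e.2 == x0) by rewrite /e; case: ifP => _; rewrite eqxx ?orbT.
have key : connect (adj (F :\ e)) x0 xk.
  apply: (@connect_trans _ _ x1).
    apply: connect1; apply: adj_del h01; rewrite /e; case: ifP => _; apply/eqP; move=> H;
     have /= E1 := congr1 fst H; have /= E2 := congr1 snd H;
     by move: n01 n1k n0k; rewrite -?E1 -?E2 ?eqxx.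
  apply/connectP; exists t; last exact: Exk.
  apply: (@sub_in_path _ [pred z | z != x0]).
    move=> a b /= a0 b0; apply: adj_del; apply/eqP => he; move: ex0; rewrite -he /=;
      by rewrite (negPf a0) (negPf b0).
    apply/allP => z; rewrite inE => /orP[/eqP -> //|zt] /=; first by rewrite eq_sym.
    by apply: contraNneq n0t => <-.
    exact: hp.
have eE : e = (xk, x0) \/ e = (x0, xk) by rewrite /e; case: ifP; [left|right].
exists e => // u v /orP[] h.
  case: (eqVneq (u, v) e) => he.
    by case: eE he => eq; rewrite eq => -[-> ->]; rewrite -eq; first [done | by rewrite connect_symF].
  case: (eqVneq (v, u) e) => he'.
    by case: eE he' => eq; rewrite eq => -[-> ->]; rewrite -eq; first [done | by rewrite connect_symF].
  by apply: connect1; apply: adj_del; rewrite // /adj h.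
case: (eqVneq (v, u) e) => he.
  by case: eE he => eq; rewrite eq => -[-> ->]; rewrite -eq; first [done | by rewrite connect_symF].
case: (eqVneq (u, v) e) => he'.
  by case: eE he' => eq; rewrite eq => -[-> ->]; rewrite -eq; first [done | by rewrite connect_symF].
by apply: connect1; apply: adj_del; rewrite // /adj h orbT.
Qed.

Lemma extract (col : V -> bool) F : bichromatic col F -> (forall u v, connect (adj F) u v) ->
  exists2 F' : {set V * V}, F' \subset F & bst col F'.
Proof.
move: {2}#|F| (leqnn #|F|) => n; elim: n F => [|n IH] F hn hb hc;
  case: (classic (exists s, is_cycle F s)) => [[s hs]|ncyc].
- case: (@cycle_edge F s hs) => e eF _; have := cardsD1 e F; rewrite eF.
  by move: hn; rewrite leqn0 => /eqP ->.
- exists F => //; split => //; split => // s hs; apply: ncyc; by exists s.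
- case: (@cycle_edge F s hs) => e eF hdel.
  have hn' : #|F :\ e| <= n.
    by have := cardsD1 e F; rewrite eF add1n => E; move: hn; rewrite E.
  have [|u v|F' sF' hF'] := IH (F :\ e) hn'.
  + by move=> f; rewrite inE => /andP[_ /hb].
  + apply: (connect_sub (e := adj F)); last exact: hc.
    by move=> a b; apply: hdel.
  exists F' => //; apply: subset_trans sF' _; exact: subsetDl.
- exists F => //; split => //; split => // s hs; apply: ncyc; by exists s.
Qed.
End Graph.

Section Len.
Local Open Scope ring_scope.
Variables (R : realType) (V : finType) (p : V -> point R).
Definition de (e : V * V) := dist (p e.1) (p e.2).
Lemma de_ge0 e : 0 <= de e. Proof. exact: sqrtr_ge0. Qed.
Lemma TL_sub (F' F : {set V * V}) : F' \subset F -> tree_length p F' <= tree_length p F.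
Proof.
move=> sF; rewrite /tree_length [X in _ <= X](big_setID F') /=.
move/setIidPr: sF => ->; rewrite lerDl; apply: sumr_ge0 => e _; exact: de_ge0.
Qed.
Lemma TL_U1 a (F : {set V * V}) : tree_length p (a |: F) <= de a + tree_length p F.
Proof.
rewrite /tree_length; case: (boolP (a \in F)) => h.
  have -> : a |: F = F by apply/setUidPr; rewrite sub1set.
  by rewrite lerDr de_ge0.
by rewrite big_setU1.
Qed.
Lemma TL_D1 a (F : {set V * V}) : a \in F -> tree_length p F = de a + tree_length p (F :\ a).
Proof. by move=> h; rewrite /tree_length (big_setD1 _ h). Qed.
End Len.

Arguments de {R V} p e.
Arguments TL_sub {R V} p {F' F}.
Arguments TL_U1 {R V} p a F.
Arguments TL_D1 {R V} p {a F}.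
Arguments extract {V col F}.
Arguments connect_subF {V F F' u v}.
Arguments cycle_edge {V F s}.

Section Core.
Local Open Scope ring_scope.
Variables (R : realType) (V : finType) (p : V -> point R) (col : V -> bool) (E : {set V * V}).
Definition ord (u v : V) := if col u then (u, v) else (v, u).

Lemma de_ord u v : de p (ord u v) = dist (p u) (p v).
Proof. rewrite /de /ord; case: (col u) => //=; exact: dist_sym. Qed.

Lemma ord_bich u v : col v != col u -> col (ord u v).1 /\ ~~ col (ord u v).2.
Proof. by rewrite /ord; case hu: (col u); case hv: (col v) => //= _; rewrite ?hu ?hv. Qed.

Lemma adj_ord (F : {set V * V}) u v : ord u v \in F -> adj F u v.
Proof. by rewrite /ord /adj; case: (col u) => ->; rewrite ?orbT. Qed.

Lemma connect_ord (F : {set V * V}) u v : connect (adj F) u v ->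
  connect (adj F) (ord u v).1 (ord u v).2.
Proof. by rewrite /ord; case: (col u) => //=; rewrite connect_symF. Qed.

Lemma core x a y b g1 g2 :
  injective p -> general_position p -> min_bst p col E ->
  g1 \in E -> g2 \in E -> g1 != g2 ->
  seg_cross (p g1.1) (p g1.2) (p g2.1) (p g2.2) ->
  g1 = ord x a -> g2 = ord y b -> col x = col y -> col a != col x -> col b != col y ->
  connect (adj (E :\ g1 :\ g2)) x y -> False.
Proof.
move=> pinj gp [[hbE [hcE _]] hmin] g1E g2E n12 hcr e1 e2 cxy cax cby hxy.
have cr : seg_cross (p x) (p a) (p y) (p b).
  by move: hcr; rewrite e1 e2 /ord -cxy; case: (col x) => //=; exact: cross_rev.
have nxa : x != a by apply/eqP => h; move: cax; rewrite h eqxx.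
have nxb : x != b by apply/eqP => h; move: cby; rewrite -h cxy eqxx.
have nya : y != a by apply/eqP => h; move: cax; rewrite -h cxy eqxx.
case: (eqVneq x y) => [exy|nxy].
  have nab : a != b.
    by apply/eqP => eab; move: n12; rewrite e1 e2 exy eab eqxx.
  apply: (gp x a b nxa nab nxb); apply: cross_shared1; by rewrite {2}exy.
case: (eqVneq a b) => [eab|nab].
  have nay : a != y by rewrite eq_sym.
  apply: (gp x a y nxa nay nxy); apply: cross_shared2; by rewrite {2}eab.
have hlt := cross_ineq cr (gp x a b nxa nab nxb).
set E0 := E :\ g1 :\ g2 in hxy.
set E' := ord x b |: (ord y a |: E0).
have sE0 : E0 \subset E' by apply/subsetP => f fE; rewrite /E' !in_setU1 fE !orbT.
have hbE' : bichromatic col E'.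
  move=> f; rewrite !inE => /orP[/eqP ->|/orP[/eqP ->|]].
  - by apply: ord_bich; rewrite cxy.
  - by apply: ord_bich; rewrite -cxy.
  - by move=> /andP[_ /andP[_ /hbE]].
have cxy' : connect (adj E') x y := connect_subF sE0 hxy.
have axb : connect (adj E') x b by apply/connect1/adj_ord; rewrite setU11.
have aya : connect (adj E') y a by apply/connect1/adj_ord; rewrite setU1r // setU11.
have hf : forall f, f \in E -> connect (adj E') f.1 f.2.
  move=> f fE.
  case: (eqVneq f g1) => [->|n1].
    rewrite e1; apply: connect_ord; exact: connect_trans cxy' aya.
  case: (eqVneq f g2) => [->|n2].
    rewrite e2; apply: connect_ord; apply: connect_trans axb.
    by rewrite connect_symF.
  apply/connect1; rewrite /adj -surjective_pairing.
  by apply/orP; left; apply: (subsetP sE0); rewrite !inE n1 n2 fE.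
have hcE' : forall u v, connect (adj E') u v.
  move=> u v; apply: (connect_sub (e := adj E)); last exact: hcE.
  move=> c d /orP[] h; first exact: (hf _ h).
  by rewrite connect_symF; exact: (hf _ h).
have [F sF hF] := extract hbE' hcE'.
have h1 := hmin F hF.
have h2 := TL_sub p sF.
have h3 : tree_length p E' <= de p (ord x b) + (de p (ord y a) + tree_length p E0).
  apply: le_trans (TL_U1 p _ _) _; rewrite lerD2l; exact: TL_U1.
have h4 : tree_length p E = de p g1 + (de p g2 + tree_length p E0).
  rewrite (TL_D1 p g1E) (@TL_D1 _ _ p g2) // !inE g2E andbT eq_sym //.
move: h3 h4; rewrite !de_ord e1 e2 !de_ord => h3 h4.
clear -h1 h2 h3 h4 hlt; lra.
Qed.
End Core.
Arguments ord {V} col u v.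

Section Paths.
Variable V : finType.
Definition isend (g : V * V) (v : V) := (v == g.1) || (v == g.2).

Lemma one_end_single (g : V * V) (v : V) : one_endpoint [:: v] g -> isend g v.
Proof. by rewrite /one_endpoint /isend !inE (eq_sym v) (eq_sym v); case: (_ == v); case: (_ == v). Qed.

Lemma one_drop_head (g : V * V) (x : V) (t : seq V) : ~~ isend g x -> one_endpoint (x :: t) g = one_endpoint t g.
Proof.
rewrite /isend negb_or => /andP[h1 h2].
by rewrite /one_endpoint !in_cons !(eq_sym _ x) (negPf h1) (negPf h2).
Qed.

Lemma one_drop_last (g : V * V) (z : V) (t : seq V) : ~~ isend g z -> one_endpoint (rcons t z) g = one_endpoint t g.
Proof.
rewrite /isend negb_or => /andP[h1 h2].
by rewrite /one_endpoint !mem_rcons !in_cons !(eq_sym _ z) (negPf h1) (negPf h2).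
Qed.

Lemma both_in (g : V * V) (t : seq V) : g.1 \in t -> g.2 \in t -> ~~ one_endpoint t g.
Proof. by rewrite /one_endpoint => -> ->. Qed.

Lemma two_ends (g : V * V) (u v : V) (t : seq V) : isend g u -> isend g v -> u != v -> u \in t -> v \in t ->
  ~~ one_endpoint t g.
Proof.
rewrite /isend => /orP[]/eqP -> /orP[]/eqP -> //; rewrite ?eqxx // => _ h1 h2;
  apply: both_in => //.
Qed.

Lemma last_eq_nil (x : V) s : uniq (x :: s) -> last x s = x -> s = [::].
Proof.
case: s => // y t /= /andP[nx _] hl; move: nx; rewrite -{1}hl.
by have := mem_last y t; rewrite !inE => ->.
Qed.

Lemma end_ord (col : V -> bool) (E : {set V * V}) g v :
  bichromatic col E -> g \in E -> isend g v ->
  exists a, g = ord col v a /\ col a != col v.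
Proof.
move=> hb gE; have [c1 c2] := hb g gE; case/orP => /eqP ->.
- exists g.2; rewrite /ord c1 -surjective_pairing; split => //; by case: (col g.2) c2.
- exists g.1; rewrite /ord (negPf c2) -surjective_pairing; split => //; by rewrite c1.
Qed.
End Paths.
Arguments isend {V}.
Arguments one_end_single {V g v}.
Arguments one_drop_head {V g x} t.
Arguments one_drop_last {V g z} t.
Arguments two_ends {V g u v t}.
Arguments last_eq_nil {V x s}.
Arguments end_ord {V col E g v}.

Local Open Scope ring_scope.

Theorem lemma3 (R : realType) (V : finType) (p : V -> point R)
  (col : V -> bool) (E : {set V * V}) (e1 e2 : V * V) (x : V) (s : seq V) :
  injective p ->
  general_position p ->
  (exists u, col u) -> (exists v, ~~ col v) ->
  min_bst p col E ->
  e1 \in E -> e2 \in E -> e1 != e2 ->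
  seg_cross (p e1.1) (p e1.2) (p e2.1) (p e2.2) ->
  (* pi(e1,e2) = x :: s : a shortest path in the tree containing exactly
     one endpoint of e1 and exactly one endpoint of e2 *)
  is_path E x s -> one_endpoint (x :: s) e1 -> one_endpoint (x :: s) e2 ->
  (forall x' s', is_path E x' s' -> one_endpoint (x' :: s') e1 ->
     one_endpoint (x' :: s') e2 -> (size s <= size s')%N) ->
  col x != col (last x s).
Proof.
move=> pinj gp _ _ hmin e1E e2E n12 hcr [hu hp] o1 o2 hsh.
have hb : bichromatic col E by case: hmin => [[]].
set y := last x s.
have hA : isend e1 x || isend e2 x.
  case: s hu hp o1 o2 hsh {y} => [|z s2] hu hp o1 o2 hsh.
    by rewrite one_end_single.
  apply/negPn/negP; rewrite negb_or => /andP[n1 n2].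
  have H := hsh z s2; rewrite -(one_drop_head _ n1) -(one_drop_head _ n2) /= ltnn in H.
  suff : false by []. apply: H => //; split; first by case/andP: hu.
  by case/andP: hp.
have hB : isend e1 y || isend e2 y.
  rewrite /y; case/lastP: s hu hp o1 o2 hsh {y hA} => [|s' z] hu hp o1 o2 hsh.
    by rewrite one_end_single.
  rewrite last_rcons; apply/negPn/negP; rewrite negb_or => /andP[n1 n2].
  have e : x :: rcons s' z = rcons (x :: s') z by [].
  rewrite e in hu o1 o2.
  have H := hsh x s'; rewrite -(one_drop_last _ n1) -(one_drop_last _ n2) size_rcons ltnn in H.
  suff : false by []. apply: H => //; split; first by move: hu; rewrite rcons_uniq => /andP[].
  by move: hp; rewrite rcons_path => /andP[].
have yin : y \in x :: s by exact: mem_last.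
have xin : x \in x :: s by rewrite inE eqxx.
have hC : (isend e1 x && isend e2 y) || (isend e2 x && isend e1 y).
  case/orP: hA => hx; case/orP: hB => hy; rewrite ?hx ?hy ?orbT //.
  - case: (eqVneq x y) => [exy|nxy]; last by move: o1; rewrite (negPf (two_ends hx hy nxy xin yin)).
    have s0 : s = [::] by apply: last_eq_nil hu _; rewrite -/y -exy.
    by move: o2; rewrite s0 -exy => /one_end_single ->.
  - case: (eqVneq x y) => [exy|nxy]; last by move: o2; rewrite (negPf (two_ends hx hy nxy xin yin)).
    have s0 : s = [::] by apply: last_eq_nil hu _; rewrite -/y -exy.
    by move: o1; rewrite s0 -exy => /one_end_single ->; rewrite orbT.
have hcon : connect (adj (E :\ e1 :\ e2)) x y.
  apply/connectP; exists s => //.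
  apply: (@sub_in_path _ [pred z | z \in x :: s]); last exact: hp.
    move=> u v /= hu' hv' /orP[] h; apply/orP; [left|right]; rewrite !inE h andbT;
      apply/andP; split; apply/eqP => Ee;
      [ move: o2 | move: o1 | move: o2 | move: o1];
      by rewrite /one_endpoint -Ee /= ?hu' ?hv'.
  by apply/allP.
apply/negP => /eqP cxy.
case/orP: hC => /andP[hx hy].
- have [a [ea ca]] := end_ord hb e1E hx.
  have [b [eb cb]] := end_ord hb e2E hy.
  exact: (@core R V p col E x a y b e1 e2 pinj gp hmin e1E e2E n12 hcr ea eb cxy ca cb hcon).
- have [a [ea ca]] := end_ord hb e2E hx.
  have [b [eb cb]] := end_ord hb e1E hy.
  apply: (@core R V p col E x a y b e2 e1 pinj gp hmin e2E e1E _ (cross_sym hcr) ea eb cxy ca cb).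
    by rewrite eq_sym.
  by rewrite !setDDl setUC -!setDDl.
Qed.
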